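(* In the setting below, let $\mu$ be a $\sigma$-invariant Borel probability measure on $X$. If $\mu(A_i)=1$ for some $1\le i\le r$, then $(X,\sigma,G,\mu)$ is measure conjugate to $(\overleftarrow{G},\phi,G,\nu)$, where $\overleftarrow{G}$ is the $G$-odometer associated to $(\Gamma_n)_{n\ge1}$, $\phi$ is its action by left multiplication and $\nu$ is its unique invariant (Haar) probability measure.
   Context: Setting: $G$ is a countable residually finite group, $r>1$; $(\Gamma_i)_{i\ge1}$ is a strictly decreasing sequence of finite index normal subgroups of $G$ with $\bigcap_i\Gamma_i=\{1_G\}$, $\Gamma_0=G$; $(D_i)_{i\ge0}$ are finite subsets with $D_0=\{1_G\}$, $D_i$ containing exactly one element of each coset of $\Gamma_i$, $1_G\in D_i\subseteq D_{i+1}$, $G=\bigcup_iD_i$, $D_j=\bigcup_{v\in D_j\cap\Gamma_i}vD_i$ for $j>i\ge1$, and $[G:\Gamma_i],[\Gamma_i:\Gamma_{i+1}]\ge3$. $\Sigma=\{1,\dots,r\}$, $\alpha_m\in\Sigma$ with $\alpha_m\equiv m\pmod r$. $J(0)=\{1_G\}$, $J(m)=D_m\setminus\bigcup_{i<m}J(i)\Gamma_{i+1}$; $\eta(hg)=\alpha_{m+1}$ for $h\in J(m)$, $g\in\Gamma_{m+1}$; $X=\overline{\{\sigma^g\eta\}}$ with $\sigma^gx(h)=x(g^{-1}h)$. $\mathrm{Per}(x,\Gamma,\alpha)=\{g:x(\gamma g)=\alpha\ \forall\gamma\in\Gamma\}$. For $n\ge1$: $C_n=\{x\in X:\mathrm{Per}(x,\Gamma_n,\alpha)=\mathrm{Per}(\eta,\Gamma_n,\alpha)\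 \forall\alpha\}$, $C_{n,i}=\{x\in C_n:x(g)=i\ \forall g\in J(n)\}$. For $1\le i\le r$, $k\ge0$: $Z_{i,k}=\bigcup_{v\in D_{i+kr}}\sigma^{v^{-1}}C_{i+kr,i}$, and $A_i=\bigcap_{g\in G}\bigcup_{k\ge0}\bigcap_{l\ge k}\sigma^g(Z_{i,l})$. The $G$-odometer is $\{(x_n)\in\prod_nG/\Gamma_n: x_{n+1}\mapsto x_n$ under canonical projections$\}$. Measure conjugacy: a bimeasurable bijection between invariant conull subsets intertwining the actions and pushing one measure to the other. *)

(* Defs.v *)
From HB Require Import structures.
From mathcomp Require Import all_boot all_order all_algebra.
From mathcomp Require Import boolp classical_sets functions cardinality reals ereal.
From mathcomp Require Import measure probability.

Set Implicit Arguments.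
Unset Strict Implicit.
Unset Printing Implicit Defensive.

Local Open Scope classical_set_scope.
Local Open Scope group_scope.

Section GroupNotions.
Variable G : groupType.

Definition is_subgroup (H : set G) : Prop :=
  H 1 /\ (forall x y, H x -> H y -> H (x * y^-1)).

Definition is_normal (H : set G) : Prop :=
  forall g h, H h -> H (g^-1 * h * g).

Definition lcoset (g : G) (H : set G) : set G := (fun h => g * h) @` H.

Definition setmulg (A H : set G) : set G := [set a * h | a in A & h in H].

Definition finite_index (H : set G) : Prop :=
  finite_set (range (fun g => lcoset g H)).

Definition index_ge3 (K H : set G) : Prop :=
  exists a b c, [/\ K a, K b & K c] /\
    [/\ lcoset a H <> lcoset b H, lcoset a H <> lcoset c H & lcoset b H <> lcoset c H].

Definition residually_finite : Prop :=
  forall g, g <> 1 -> exists H : set G,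
    [/\ is_subgroup H, is_normal H, finite_index H & ~ H g].

Definition transversal (D H : set G) : Prop :=
  forall g, exists! d, D d /\ lcoset d H = lcoset g H.

Definition setting (Gam D : nat -> set G) : Prop :=
  [/\ [/\ Gam 0 = setT,
      (forall i, Gam i.+1 `<` Gam i),
      (forall i, (1 <= i)%N -> [/\ is_subgroup (Gam i), is_normal (Gam i) & finite_index (Gam i)]) &
      \bigcap_i Gam i = [set 1]],
      [/\ D 0 = [set 1],
      (forall i, finite_set (D i) /\ transversal (D i) (Gam i)),
      (forall i, D i 1 /\ D i `<=` D i.+1) &
      \bigcup_i D i = setT] &
      [/\ (forall i j, (1 <= i)%N -> (i < j)%N ->
             D j = \bigcup_(v in D j `&` Gam i) lcoset v (D i)),
          (forall i, (1 <= i)%N -> index_ge3 setT (Gam i)) &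
          (forall i, (1 <= i)%N -> index_ge3 (Gam i) (Gam i.+1))]].

(** The sets J(m): J(0) = {1}, J(m) = D_m \ U_{i<m} J(i) Gamma_{i+1}.
    JU m = (J m, U_{i<m} J(i) Gamma_{i+1}). *)
Fixpoint JU (Gam D : nat -> set G) (m : nat) : set G * set G :=
  match m with
  | 0 => ([set 1], set0)
  | m'.+1 => let p := JU Gam D m' in
             let U := p.2 `|` setmulg p.1 (Gam m) in
             (D m `\` U, U)
  end.

Definition J (Gam D : nat -> set G) (m : nat) : set G := (JU Gam D m).1.

(** symbols: Sigma = {1,..,r} (as natural numbers); alpha_m in Sigma, alpha_m = m mod r *)
Definition alpha (r m : nat) : nat := if (m %% r == 0)%N then r else (m %% r)%N.

Definition shift (g : G) (x : G -> nat) : G -> nat := fun h => x (g^-1 * h).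

(** orbit closure of eta in the product (discrete) topology: x is in the closure
    iff on every finite set of coordinates it agrees with some translate of eta *)
Definition orbit_closure (eta : G -> nat) : set (G -> nat) :=
  [set x | forall F : set G, finite_set F ->
             exists g, forall h, F h -> shift g eta h = x h].

Definition Per (x : G -> nat) (H : set G) (a : nat) : set G :=
  [set g | forall c, H c -> x (c * g) = a].

Definition Cset (Gam : nat -> set G) (r : nat) (eta : G -> nat) (n : nat) : set (G -> nat) :=
  [set x | orbit_closure eta x /\
     forall a, (1 <= a <= r)%N -> Per x (Gam n) a = Per eta (Gam n) a].

Definition Cset2 (Gam D : nat -> set G) (r : nat) (eta : G -> nat) (n i : nat) : set (G -> nat) :=
  [set x | Cset Gam r eta n x /\ forall g, J Gam D n g -> x g = i].

Definition Zset (Gam D : nat -> set G) (r : nat) (eta : G -> nat) (i k : nat) : set (G -> nat) :=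
  \bigcup_(v in D (i + k * r)%N)
     (shift v^-1) @` Cset2 Gam D r eta (i + k * r)%N i.

Definition Aset (Gam D : nat -> set G) (r : nat) (eta : G -> nat) (i : nat) : set (G -> nat) :=
  \bigcap_(g in setT)
    \bigcup_(k in setT) \bigcap_(l in [set l | (k <= l)%N])
        (shift g) @` Zset Gam D r eta i l.

(** Borel sigma-algebra of the product topology on nat^G (G countable, nat discrete):
    generated by the cylinders {x | x g = a}. *)
Definition cylG : set (set (G -> nat)) :=
  [set A | exists g a, A = [set x | x g = a]].
Definition configT := g_sigma_algebraType cylG.

(** G-odometer: sequences (x_n) of cosets x_n in G/Gamma_n, compatible with the
    canonical projections (x_{n+1} is contained in x_n). *)
Definition odometer (Gam : nat -> set G) : set (nat -> set G) :=
  [set o | (forall n, exists g, o n = lcoset g (Gam n)) /\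
           (forall n, o n.+1 `<=` o n)].

Definition odo_act (g : G) (o : nat -> set G) : nat -> set G :=
  fun n => lcoset g (o n).

(** Borel sigma-algebra of the product of the discrete spaces G/Gamma_n:
    generated by the cylinders {o | o n = C}. *)
Definition cylO : set (set (nat -> set G)) :=
  [set A | exists n (C : set G), A = [set o | o n = C]].
Definition odoT := g_sigma_algebraType cylO.

End GroupNotions.

Definition measure_conjugate (G : groupType) (R : realType)
  d1 d2 (T1 : measurableType d1) (T2 : measurableType d2)
  (S1 : set T1) (a1 : G -> T1 -> T1) (m1 : set T1 -> \bar R)
  (S2 : set T2) (a2 : G -> T2 -> T2) (m2 : set T2 -> \bar R) : Prop :=
  exists (X0 : set T1) (Y0 : set T2) (f : T1 -> T2),
    [/\ [/\ measurable X0, X0 `<=` S1, m1 (S1 `\` X0) = 0%E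
           & forall g x, X0 x -> X0 (a1 g x)],
        [/\ measurable Y0, Y0 `<=` S2, m2 (S2 `\` Y0) = 0%E
           & forall g y, Y0 y -> Y0 (a2 g y)],
        [/\ set_bij X0 Y0 f, measurable_fun X0 f &
            forall A, measurable A -> measurable (f @` (X0 `&` A))],
        (forall g x, X0 x -> f (a1 g x) = a2 g (f x)) &
        (forall B, measurable B -> m2 (Y0 `&` B) = m1 (X0 `&` f @^-1` B))].

(* Main.v *)
Require Import Defs.
From HB Require Import structures.
From mathcomp Require Import all_boot all_order all_algebra.
From mathcomp Require Import boolp classical_sets functions cardinality reals ereal.
From mathcomp Require Import measure probability.
From mathcomp Require Import zify.
Set Implicit Arguments.
Unset Strict Implicit.
Unset Printing Implicit Defensive.
Import Order.TTheory GRing.Theory Num.Theory.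
Local Open Scope classical_set_scope.
Local Open Scope group_scope.

Ltac gsimp := rewrite ?invgM ?invgK ?mulgA; rewrite ?(mulgK, mulgVK, mulgV, mulVg, mul1g, mulg1).

Section Grp.
Variable G : groupType.
Implicit Types (g h x y a b : G) (S H : set G).

Lemma lcosetP g S h : lcoset g S h <-> S (g^-1 * h).
Proof.
split; first by case=> s Ss <-; rewrite mulKg.
by move=> Sh; exists (g^-1 * h) => //; rewrite mulVKg.
Qed.

Lemma lcosetE g S : lcoset g S = [set h | S (g^-1 * h)].
Proof. by apply/seteqP; split => h /lcosetP. Qed.

Lemma lcosetM a b S : lcoset a (lcoset b S) = lcoset (a * b) S.
Proof. by rewrite !lcosetE; apply/seteqP; split => h /=; rewrite invgM mulgA. Qed.

Lemma lcoset1 S : lcoset 1 S = S.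
Proof. by rewrite lcosetE; apply/seteqP; split => h /=; rewrite invg1 mul1g. Qed.

Lemma lcoset_inj a S S' : lcoset a S = lcoset a S' -> S = S'.
Proof.
move=> e; have := congr1 (lcoset a^-1) e; by rewrite !lcosetM mulVg !lcoset1.
Qed.

Lemma lcoset_eqV a S S' : lcoset a S = S' <-> S = lcoset a^-1 S'.
Proof.
split => [<-|->]; first by rewrite lcosetM mulVg lcoset1.
by rewrite lcosetM mulgV lcoset1.
Qed.

Lemma subg1 H : is_subgroup H -> H 1. Proof. by case. Qed.
Lemma subgV H x : is_subgroup H -> H x -> H x^-1.
Proof. by move=> [H1 HM] Hx; have := HM _ _ H1 Hx; rewrite mul1g. Qed.
Lemma subgM H x y : is_subgroup H -> H x -> H y -> H (x * y).
Proof. by move=> sH Hx Hy; have := (sH.2 _ _ Hx (subgV sH Hy)); rewrite invgK. Qed.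

Lemma lcoset_eq H a b : is_subgroup H -> (lcoset a H = lcoset b H <-> H (a^-1 * b)).
Proof.
move=> sH; split => [e|Hab].
  have : lcoset b H b by apply/lcosetP; rewrite mulVg; exact: subg1.
  by rewrite -e => /lcosetP.
rewrite !lcosetE; apply/seteqP; split => h /= Hh.
  have := subgM sH (subgV sH Hab) Hh; by rewrite invgM invgK !mulgA mulgK.
have := subgM sH Hab Hh; by rewrite !mulgA mulgK.
Qed.

Lemma lcoset_self H a : is_subgroup H -> lcoset a H a.
Proof. by move=> sH; apply/lcosetP; rewrite mulVg; exact: subg1. Qed.

End Grp.

Section MeasTool.
Context d (T : measurableType d).
Implicit Types (A B : T -> Prop).

Lemma mset_const (Q : Prop) : measurable [set _ : T | Q].
Proof.
case: (pselect Q) => q.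
  by rewrite (_ : [set _ | Q] = setT) //; apply/seteqP; split.
by rewrite (_ : [set _ | Q] = set0) //; apply/seteqP; split.
Qed.

Lemma mset_and A B : measurable [set x | A x] -> measurable [set x | B x] ->
  measurable [set x | A x /\ B x].
Proof. exact: measurableI. Qed.

Lemma mset_or A B : measurable [set x | A x] -> measurable [set x | B x] ->
  measurable [set x | A x \/ B x].
Proof. exact: measurableU. Qed.

Lemma mset_not A : measurable [set x | A x] -> measurable [set x | ~ A x].
Proof. exact: measurableC. Qed.

Lemma mset_imp A B : measurable [set x | A x] -> measurable [set x | B x] ->
  measurable [set x | A x -> B x].
Proof.
move=> mA mB; rewrite (_ : [set x | A x -> B x] = [set x | ~ A x \/ B x]).
  by apply: mset_or => //; exact: mset_not.
apply/seteqP; split => x /=; last by case => // nA /nA.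
by case: (pselect (A x)) => [/[swap] /[apply]|]; [right|left].
Qed.

Lemma mset_iff A B : measurable [set x | A x] -> measurable [set x | B x] ->
  measurable [set x | A x <-> B x].
Proof. by move=> mA mB; apply: mset_and; apply: mset_imp. Qed.

Lemma mset_exN (P : nat -> T -> Prop) : (forall n, measurable [set x | P n x]) ->
  measurable [set x | exists n, P n x].
Proof.
move=> mP; rewrite (_ : [set x | exists n, P n x] = \bigcup_n [set x | P n x]).
  exact: bigcupT_measurable.
by apply/seteqP; split => x /=; [case=> n Pn; exists n|case=> n _ Pn; exists n].
Qed.

Lemma mset_allN (P : nat -> T -> Prop) : (forall n, measurable [set x | P n x]) ->
  measurable [set x | forall n, P n x].
Proof.
move=> mP; rewrite (_ : [set x | forall n, P n x] = \bigcap_n [set x | P n x]).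
  exact: bigcapT_measurable.
by apply/seteqP; split => x /= H n; [move=> _|]; apply: H.
Qed.

Lemma mset_exC (U : Type) (P : U -> T -> Prop) : countable [set: U] ->
  (forall u, measurable [set x | P u x]) -> measurable [set x | exists u, P u x].
Proof.
move=> cU mP; rewrite (_ : [set x | exists u, P u x] = \bigcup_u [set x | P u x]).
  exact: countable_bigcupT_measurable.
by apply/seteqP; split => x /=; [case=> n Pn; exists n|case=> n _ Pn; exists n].
Qed.

Lemma mset_allC (U : Type) (P : U -> T -> Prop) : countable [set: U] ->
  (forall u, measurable [set x | P u x]) -> measurable [set x | forall u, P u x].
Proof.
move=> cU mP; rewrite (_ : [set x | forall u, P u x] = ~` [set x | exists u, ~ P u x]).
  by apply: measurableC; apply: mset_exC => // u; apply: mset_not.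
apply/seteqP; split => x /=; first by move=> H [u]; apply; apply: H.
by move=> H u; apply: contrapT => nP; apply: H; exists u.
Qed.

Lemma mset_ex_le (P : nat -> T -> Prop) (N : nat) :
  (forall n, measurable [set x | P n x]) -> measurable [set x | forall n, (n <= N)%N -> P n x].
Proof. by move=> mP; apply: mset_allN => n; apply: mset_imp => //; exact: mset_const. Qed.

Lemma mset_and3 A B C : measurable [set x | A x] -> measurable [set x | B x] ->
  measurable [set x | C x] -> measurable [set x | [/\ A x, B x & C x]].
Proof.
move=> mA mB mC; rewrite (_ : [set x | _] = [set x | A x /\ (B x /\ C x)]).
  by apply: mset_and => //; apply: mset_and.
by apply/seteqP; split => x /=; [case|case=> ? []].
Qed.

Lemma mfoldr (Q : nat -> T -> Prop) (s : seq nat) dflt b :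
  (forall a, measurable [set o | Q a o]) ->
  measurable [set o | foldr (fun a acc => if `[< Q a o >] then a else acc) dflt s = b].
Proof.
move=> mQ; elim: s => [|a s IH] /=; first exact: mset_const.
rewrite (_ : [set o | _] = [set o | (Q a o /\ a = b) \/
   (~ Q a o /\ foldr (fun a acc => if `[< Q a o >] then a else acc) dflt s = b)]).
  apply: mset_or; apply: mset_and => //; try exact: mset_const; exact: mset_not.
by apply/seteqP; split => o /=; case: asboolP => q; tauto.
Qed.

End MeasTool.

Section ProbTool.
Context d (T : measurableType d) (R : realType) (P : probability T R).
Local Open Scope ereal_scope.

Lemma pC0 E : measurable E -> P E = 1 -> P (~` E) = 0.
Proof. by move=> mE PE; rewrite probability_setC // PE subee. Qed.

Lemma pI1 E B : measurable E -> P E = 1 -> measurable B -> P (B `&` E) = P B.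
Proof.
move=> mE PE mB.
have eB : B = (B `&` E) `|` (B `&` ~` E) by rewrite -setIUr setUv setIT.
have m1 : measurable (B `&` E) by exact: measurableI.
have m2 : measurable (B `&` ~` E) by apply: measurableI => //; exact: measurableC.
have dj : (B `&` E) `&` (B `&` ~` E) = set0 by rewrite setIACA setICr setI0.
have h0 : P (B `&` ~` E) = 0.
  apply/le_anti/andP; split; last exact: measure_ge0.
  rewrite -(pC0 mE PE); apply: le_measure; rewrite ?inE //; exact: measurableC.
apply/esym; transitivity (P (B `&` E) + P (B `&` ~` E)); last by rewrite h0 adde0.
by rewrite [in LHS]eB measureU.
Qed.

Lemma p_mono1 A B : measurable A -> measurable B -> A `<=` B -> P A = 1 -> P B = 1.
Proof.
move=> mA mB AB PA; apply/le_anti/andP; split; first exact: probability_le1.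
by rewrite -PA; apply: le_measure; rewrite ?inE.
Qed.

End ProbTool.

Section PF.
Context d1 d2 (T1 : measurableType d1) (T2 : measurableType d2) (R : realType)
  (mu : measure T1 R) (f : T1 -> T2) (mf : measurable_fun setT f).
Definition pfm : measure T2 R.
Proof. refine (pushforward mu f : measure T2 R). exact mf. Defined.
Lemma pfmE B : pfm B = mu (f @^-1` B). Proof. by []. Qed.
End PF.

Section Toep.
Variable G : groupType.
Variables (Gam D : nat -> set G) (r : nat) (eta : G -> nat).
Hypothesis Hs : setting Gam D.
Hypothesis r1 : (1 < r)%N.
Hypothesis Heta : forall m h g, J Gam D m h -> Gam m.+1 g -> eta (h * g) = alpha r m.+1.
Implicit Types (g h x y c u v w s : G) (S : set G).

Lemma Gam0 : Gam 0 = setT. Proof. by case: Hs => [[]]. Qed.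

Lemma Gam_sub n : is_subgroup (Gam n).
Proof.
case: n => [|n]; first by rewrite Gam0.
by case: Hs => [[_ _ H _] _ _]; case: (H n.+1 isT).
Qed.

Lemma Gam_norm n : is_normal (Gam n).
Proof.
case: n => [|n]; first by rewrite Gam0.
by case: Hs => [[_ _ H _] _ _]; case: (H n.+1 isT).
Qed.

Lemma Gam1 n : Gam n 1. Proof. exact: subg1 (Gam_sub n). Qed.
Lemma GamV n x : Gam n x -> Gam n x^-1. Proof. exact: subgV (Gam_sub n). Qed.
Lemma GamM n x y : Gam n x -> Gam n y -> Gam n (x * y). Proof. exact: subgM (Gam_sub n). Qed.
Lemma GamJ n g x : Gam n x -> Gam n (g^-1 * x * g). Proof. exact: Gam_norm. Qed.
Lemma GamJ' n g x : Gam n x -> Gam n (g * x * g^-1).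
Proof. by move=> /(GamJ g^-1); rewrite invgK. Qed.

Lemma Gam_le m n : (m <= n)%N -> Gam n `<=` Gam m.
Proof.
move=> /subnK <-; elim: (n - m)%N => [|k IH] //.
case: Hs => [[_ Hd _ _] _ _].
by rewrite addSn; apply: subset_trans IH; case: (Hd (k + m)%N).
Qed.

Lemma Dtrans n g : exists d, D n d /\ Gam n (d^-1 * g).
Proof.
case: Hs => [_ [_ Ht _ _] _]; case: (Ht n) => _ /(_ g) [d [[Dd e] _]].
by exists d; split => //; apply/(lcoset_eq _ _ (Gam_sub n)).
Qed.

Lemma Duniq n d d' : D n d -> D n d' -> Gam n (d^-1 * d') -> d = d'.
Proof.
case: Hs => [_ [_ Ht _ _] _]; case: (Ht n) => _ /(_ d) [e [_ He]] Dd Dd' Gdd.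
rewrite -(He d) // -(He d') //; split => //.
by apply/(lcoset_eq _ _ (Gam_sub n)); have := GamV Gdd; rewrite invgM invgK.
Qed.

Definition U n := (JU Gam D n).2.
Lemma U0 : U 0 = set0. Proof. by []. Qed.
Lemma US n : U n.+1 = U n `|` setmulg (J Gam D n) (Gam n.+1). Proof. by []. Qed.
Lemma JS n : J Gam D n.+1 = D n.+1 `\` U n.+1. Proof. by []. Qed.
Lemma J0 : J Gam D 0 = [set 1]. Proof. by []. Qed.

Lemma D0 : D 0 = [set 1]. Proof. by case: Hs => [_ []]. Qed.

Lemma J_D n h : J Gam D n h -> D n h.
Proof. by case: n => [|n]; [rewrite J0 D0|rewrite JS => -[]]. Qed.

Lemma U_spec n u : U n u <->
  exists i j y, [/\ (i < n)%N, J Gam D i j, Gam i.+1 y & u = j * y].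
Proof.
elim: n u => [|n IH] u; first by split=> // -[i [j [y [] //]]].
rewrite US; split.
  case=> [/IH [i [j [y [lt Jj Gy ->]]]]|[j Jj [y Gy <-]]].
    by exists i, j, y; split => //; apply: ltnW.
  by exists n, j, y.
move=> [i [j [y [lt Jj Gy ->]]]]; move: lt; rewrite ltnS leq_eqVlt => /orP[/eqP ei|lt].
  by right; subst i; exists j => //; exists y.
by left; apply/IH; exists i, j, y.
Qed.

Lemma U_closed n u y : U n u -> Gam n y -> U n (u * y).
Proof.
move=> /U_spec [i [j [z [lt Jj Gz ->]]]] Gy; apply/U_spec; exists i, j, (z * y).
split => //; last by rewrite mulgA.
by apply: GamM => //; apply: (Gam_le lt).
Qed.

Lemma J_notU n h : J Gam D n h -> ~ U n h.
Proof. case: n => [|n]; first by rewrite U0 => _ []. by rewrite JS => -[]. Qed.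

Lemma hole_notU n h y : J Gam D n h -> Gam n (h^-1 * y) -> ~ U n y.
Proof.
move=> Jh Gy Uy; apply: (J_notU Jh).
have := U_closed Uy (GamV Gy); by rewrite invgM invgK mulgA mulgV mul1g.
Qed.

Lemma rep_J k h y d : J Gam D k h -> Gam k (h^-1 * y) -> ~ Gam k.+1 (h^-1 * y) ->
  D k.+1 d -> Gam k.+1 (d^-1 * y) -> J Gam D k.+1 d.
Proof.
move=> Jh Gky nG Dd Gdy; rewrite JS; split => //; rewrite US => -[Ud|[j Jj [z Gz ejd]]].
  apply: (hole_notU Jh _ Ud).
  have := GamM Gky (Gam_le (leqnSn k) (GamV Gdy)).
  by rewrite invgM invgK !mulgA mulgK.
have ejh : j = h.
  apply: (Duniq (J_D Jj) (J_D Jh)).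
  have -> : j^-1 * h = z * ((d^-1 * y) * (y^-1 * h)).
    by rewrite -ejd !invgM !mulgA mulgV mul1g mulgK.
  have Gyh : Gam k (y^-1 * h) by have := GamV Gky; rewrite invgM invgK.
  apply: GamM; first exact: (Gam_le (leqnSn k) Gz).
  by apply: GamM => //; exact: (Gam_le (leqnSn k) Gdy).
subst j; apply: nG.
have -> : h^-1 * y = z * (d^-1 * y) by rewrite -ejd invgM !mulgA mulgV mul1g.
exact: GamM.
Qed.

Lemma J_nonempty k : exists h, J Gam D k h.
Proof.
elim: k => [|k [h Jh]]; first by exists 1; rewrite J0.
case: Hs => [[_ Hd _ _] _ _]; case: (Hd k) => _ nsub.
have [y [Gy nGy]] : exists y, Gam k y /\ ~ Gam k.+1 y.
  apply: contrapT => nE; apply: nsub => y Gy; apply: contrapT => nG; apply: nE; by exists y.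
have [d [Dd Gd]] := Dtrans k.+1 (h * y).
exists d; apply: (rep_J Jh _ _ Dd Gd); rewrite mulKg //.
Qed.


Lemma alpha_range m : (1 <= alpha r m <= r)%N.
Proof.
rewrite /alpha; case: ifP => [_|/negbT nz]; first by apply/andP; split => //; lia.
apply/andP; split; first by lia.
by apply: ltnW; rewrite ltn_mod; lia.
Qed.

Lemma alpha_neq m : alpha r m.+1 <> alpha r m.+2.
Proof.
have r0 : (0 < r)%N by lia.
have H2 : (m.+2 %% r = (m.+1 %% r).+1 %% r)%N by rewrite -addn1 -modnDml addn1.
rewrite /alpha H2; have := ltn_pmod m.+1 r0; move: (m.+1 %% r)%N => q qr.
case: (ltngtP q.+1 r) => [lt|gt|eq].
- by rewrite (modn_small lt); case: eqP; case: eqP; lia.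
- lia.
- by rewrite eq modnn /=; case: eqP; lia.
Qed.

Implicit Types (z : G -> nat) (n m k : nat).

Lemma Per_left n z a g c : Per z (Gam n) a g -> Gam n c -> Per z (Gam n) a (c * g).
Proof. by move=> P Gc c' Gc'; rewrite mulgA; apply: P; exact: GamM. Qed.

Lemma Per_val n z a g : Per z (Gam n) a g -> z g = a.
Proof. by move=> /(_ 1 (Gam1 n)); rewrite mul1g. Qed.

Lemma Per_shift n w z a : Per (shift w z) (Gam n) a = lcoset w (Per z (Gam n) a).
Proof.
rewrite lcosetE; apply/seteqP; split => g /= P c Gc.
  have := P _ (GamJ' w Gc); rewrite /shift.
  by rewrite !mulgA mulVg mul1g.
have := P _ (GamJ w Gc); rewrite /shift.
by gsimp.
Qed.

Lemma Per_stab n z a s : Gam n s -> lcoset s (Per z (Gam n) a) = Per z (Gam n) a.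
Proof.
move=> Gs; rewrite lcosetE; apply/seteqP; split => g /= P.
  by have := Per_left P Gs; rewrite mulgA mulgV mul1g.
by apply: Per_left => //; exact: GamV.
Qed.

Lemma Per_down m n z a : (m <= n)%N ->
  Per z (Gam m) a = [set g | forall c, Gam m c -> Per z (Gam n) a (c * g)].
Proof.
move=> mn; apply/seteqP; split => g /= P.
  by move=> c Gc c' Gc'; rewrite mulgA; apply: P; apply: GamM => //; exact: (Gam_le mn).
by move=> c Gc; apply: Per_val; exact: P.
Qed.

Lemma Per_transfer m n z w a : (m <= n)%N ->
  Per z (Gam n) a = lcoset w (Per eta (Gam n) a) ->
  Per z (Gam m) a = lcoset w (Per eta (Gam m) a).
Proof.
move=> mn e; rewrite (Per_down z a mn) (Per_down eta a mn) e !lcosetE; apply/seteqP; split => g /= P c Gc.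
  by have := P _ (GamJ' w Gc); gsimp.
by have := P _ (GamJ w Gc); gsimp.
Qed.

Lemma hole_Per k n h g : (k < n)%N -> J Gam D k h -> Gam k.+1 (h^-1 * g) ->
  Per eta (Gam n) (alpha r k.+1) g.
Proof.
move=> kn Jh Gg c Gc.
have -> : c * g = h * ((h^-1 * c * h) * (h^-1 * g)) by rewrite !mulgA mulgV mul1g mulgK.
apply: Heta Jh _; apply: GamM => //; apply: (Gam_le kn); exact: GamJ.
Qed.

Lemma U_Per n u : U n u -> exists a, (1 <= a <= r)%N /\ Per eta (Gam n) a u.
Proof.
move=> /U_spec [i [j [y [lt Jj Gy ->]]]]; exists (alpha r i.+1); split.
  exact: alpha_range.
by apply: (hole_Per lt Jj); rewrite mulKg.
Qed.

Lemma Stab n s : (forall a, (1 <= a <= r)%N ->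
    lcoset s (Per eta (Gam n) a) = Per eta (Gam n) a) -> Gam n s.
Proof.
move=> Hst.
suff : forall k, (k <= n)%N -> Gam k s by apply.
elim=> [|k IH] kn; first by rewrite Gam0.
have Gks := IH (ltnW kn).
have [h Jh] := J_nonempty k.
suff Gh : Gam k.+1 (h^-1 * (s * h)).
  by have := GamJ' h Gh; rewrite !mulgA mulgV mul1g mulgK.
apply: contrapT => nG.
have Gk : Gam k (h^-1 * (s * h)) by rewrite mulgA; exact: GamJ.
have [d [Dd Gd]] := Dtrans k.+1 (s * h).
have Jd := rep_J Jh Gk nG Dd Gd.
have := Heta Jd (Gam1 k.+2); rewrite mulg1 => ed.
have Pd : Per eta (Gam n) (alpha r k.+1) d.
  rewrite -Hst; last exact: alpha_range.
  apply/lcosetP; apply: (hole_Per kn Jh).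
  have -> : h^-1 * (s^-1 * d) = (d^-1 * (s * h))^-1 by gsimp.
  exact: GamV.
by apply: (@alpha_neq k); rewrite -ed (Per_val Pd).
Qed.

Definition fmap z n : set G :=
  [set w | forall a, (1 <= a <= r)%N -> Per z (Gam n) a = lcoset w (Per eta (Gam n) a)].

Lemma fmap_val n z w : (forall a, (1 <= a <= r)%N ->
    Per z (Gam n) a = lcoset w (Per eta (Gam n) a)) -> fmap z n = lcoset w (Gam n).
Proof.
move=> Hw; rewrite lcosetE; apply/seteqP; split => w' /=.
  move=> Hw'; apply: Stab => a ra.
  by rewrite -lcosetM; apply/esym/lcoset_eqV; rewrite -(Hw a ra) -(Hw' a ra).
move=> Gw a ra; rewrite Hw //.
have -> : w' = w * (w^-1 * w') by gsimp.
by rewrite -lcosetM [lcoset (w^-1 * w') _]Per_stab.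
Qed.

Lemma fmap_shift g z n : fmap (shift g z) n = lcoset g (fmap z n).
Proof.
rewrite lcosetE; apply/seteqP; split => w /= P a ra; have := P a ra.
  by rewrite Per_shift lcoset_eqV lcosetM.
by rewrite Per_shift => ->; rewrite lcosetM mulVKg.
Qed.


Lemma shift1 z : shift 1 z = z.
Proof. by apply: funext => h; rewrite /shift invg1 mul1g. Qed.

Lemma shiftM a b z : shift a (shift b z) = shift (a * b) z.
Proof. by apply: funext => h; rewrite /shift invgM mulgA. Qed.

Lemma shiftK a z : shift a^-1 (shift a z) = z.
Proof. by rewrite shiftM mulVg shift1. Qed.

Lemma shiftKV a z : shift a (shift a^-1 z) = z.
Proof. by rewrite shiftM mulgV shift1. Qed.

Lemma image_shift a (A : set (G -> nat)) z : (shift a @` A) z <-> A (shift a^-1 z).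
Proof.
split => [[y Ay <-]|Az]; first by rewrite shiftK.
by exists (shift a^-1 z) => //; rewrite shiftKV.
Qed.

Variable i : nat.
Hypothesis ir : (1 <= i <= r)%N.

Lemma Zset_P l z : Zset Gam D r eta i l z <->
  exists v, D (i + l * r)%N v /\ Cset2 Gam D r eta (i + l * r)%N i (shift v z).
Proof.
split => [[v Dv /image_shift]|[v [Dv C]]]; first by rewrite invgK; exists v.
by exists v => //; apply/image_shift; rewrite invgK.
Qed.

Lemma Aset_P z : Aset Gam D r eta i z <->
  forall g, exists k, forall l, (k <= l)%N ->
    exists v, D (i + l * r)%N v /\ Cset2 Gam D r eta (i + l * r)%N i (shift (v * g^-1) z).
Proof.
split.
  move=> A g; have [k _ Hk] := A g I; exists k => l kl.
  have /image_shift /Zset_P [v [Dv C]] := Hk l kl.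
  by exists v; rewrite shiftM in C.
move=> A g _; have [k Hk] := A g; exists k => // l kl.
apply/image_shift/Zset_P; have [v [Dv C]] := Hk l kl.
by exists v; rewrite shiftM.
Qed.

Lemma A_level z : Aset Gam D r eta i z -> forall m, exists w,
  (forall a, (1 <= a <= r)%N -> Per z (Gam m) a = lcoset w (Per eta (Gam m) a))
  /\ (forall a, (1 <= a <= r)%N -> Per z (Gam m.+1) a = lcoset w (Per eta (Gam m.+1) a)).
Proof.
move=> /Aset_P /(_ 1) [k Hk] m.
have [v [Dv [[_ Cy] _]]] := Hk (maxn k m.+1) (leq_maxl _ _).
rewrite invg1 mulg1 in Cy.
have le : (m.+1 <= i + maxn k m.+1 * r)%N.
  have := leq_maxr k m.+1; nia.
have HP a : (1 <= a <= r)%N -> Per z (Gam (i + maxn k m.+1 * r)) a =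
   lcoset v^-1 (Per eta (Gam (i + maxn k m.+1 * r)) a).
  by move=> ra; rewrite -(Cy a ra) Per_shift lcosetM mulVg lcoset1.
exists v^-1; split => a ra; apply: Per_transfer (HP a ra) => //; exact: ltnW.
Qed.

Lemma A_hole z h : Aset Gam D r eta i z ->
  (forall n a, (1 <= a <= r)%N -> ~ Per z (Gam n) a h) -> z h = i.
Proof.
move=> /Aset_P /(_ h) [k Hk] nP.
have [v [Dv [[_ Cy] Jy]]] := Hk k (leqnn k).
move: Dv Cy Jy; case En: (i + k * r)%N => [|n]; first by lia.
move=> Dv Cy Jy.
have Jv : J Gam D n.+1 v.
  rewrite JS; split => // /U_Per [a [ra Pa]]; apply: (nP n.+1 a ra).
  by move: Pa; rewrite -Cy // Per_shift => /lcosetP; gsimp.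
by have := Jy v Jv; rewrite /shift; gsimp.
Qed.


Lemma orbit_shift g z : orbit_closure eta z -> orbit_closure eta (shift g z).
Proof.
move=> Oz F fF.
have [g' Hg'] := Oz ((fun h => g^-1 * h) @` F) (finite_image _ fF).
exists (g * g') => h Fh.
have := Hg' (g^-1 * h) (ex_intro2 _ _ h Fh erefl); rewrite /shift => <-.
by rewrite invgM mulgA.
Qed.

Definition Ppred (o : nat -> set G) h a : Prop :=
  exists n c, [/\ D n c, o n = lcoset c (Gam n) & Per eta (Gam n) a (c^-1 * h)].

Definition psi (o : nat -> set G) : G -> nat := fun h =>
  foldr (fun a acc => if `[< Ppred o h a >] then a else acc) i (iota 1 r).

Lemma foldr_spec (P : nat -> Prop) (s : seq nat) d :
  let v := foldr (fun a acc => if `[< P a >] then a else acc) d s in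
  (exists a, [/\ a \in s, P a & v = a]) \/ (v = d /\ forall a, a \in s -> ~ P a).
Proof.
elim: s => [|b s IH] /=; first by right.
case: asboolP => Pb; first by left; exists b; rewrite mem_head.
case: IH => [[a [ains Pa ->]]|[-> nP]].
  by left; exists a; split => //; rewrite in_cons ains orbT.
right; split => // a; rewrite in_cons => /orP[/eqP ->|] //; exact: nP.
Qed.

Lemma psi_spec o h : (exists a, [/\ (1 <= a <= r)%N, Ppred o h a & psi o h = a]) \/
  (psi o h = i /\ forall a, (1 <= a <= r)%N -> ~ Ppred o h a).
Proof.
case: (foldr_spec (Ppred o h) (iota 1 r) i) => [[a [ain Pa e]]|[e nP]].
  left; exists a; split => //; move: ain; rewrite mem_iota; lia.
right; split => // a ra; apply: nP; rewrite mem_iota; lia.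
Qed.

Lemma Ppred_coset o n w h a : o n = lcoset w (Gam n) ->
  (exists c, [/\ D n c, o n = lcoset c (Gam n) & Per eta (Gam n) a (c^-1 * h)]) <->
  Per eta (Gam n) a (w^-1 * h).
Proof.
move=> on; split.
  move=> [c [Dc oc Pc]]; move: oc; rewrite on => /(lcoset_eq _ _ (Gam_sub n)) Gwc.
  have := Per_left Pc Gwc; by gsimp.
move=> Pw; have [c [Dc Gc]] := Dtrans n w; exists c; split => //.
  by rewrite on; apply/(lcoset_eq _ _ (Gam_sub n)); have := GamV Gc; gsimp.
by have := Per_left Pw Gc; gsimp.
Qed.

Lemma odo_act_odo g o : odometer Gam o -> odometer Gam (odo_act g o).
Proof.
move=> [Ho Hs']; split => n.
  by rewrite /odo_act; have [w ->] := Ho n; exists (g * w); rewrite lcosetM.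
by move=> x [y oy <-]; exists y => //; exact: Hs'.
Qed.

Lemma Ppred_act g o h a : odometer Gam o ->
  Ppred (odo_act g o) h a <-> Ppred o (g^-1 * h) a.
Proof.
move=> [Ho _]; split => [[n [c H]]|[n [c H]]]; exists n.
  have [w on] := Ho n.
  have E : odo_act g o n = lcoset (g * w) (Gam n) by rewrite /odo_act on lcosetM.
  have : Per eta (Gam n) a ((g * w)^-1 * h) by apply/(Ppred_coset _ _ E); exists c.
  by rewrite invgM -mulgA => /(Ppred_coset _ _ on).
have [w on] := Ho n.
have : Per eta (Gam n) a (w^-1 * (g^-1 * h)) by apply/(Ppred_coset _ _ on); exists c.
rewrite mulgA -invgM => P.
have E : odo_act g o n = lcoset (g * w) (Gam n) by rewrite /odo_act on lcosetM.
by apply/(Ppred_coset _ _ E).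
Qed.

Lemma psi_act g o : odometer Gam o -> psi (odo_act g o) = shift g (psi o).
Proof.
move=> Oo; apply: funext => h; rewrite /psi /shift.
congr foldr; apply: funext => a; apply: funext => acc.
by rewrite (propext (Ppred_act g h a Oo)).
Qed.

Lemma fmap_odo z : Aset Gam D r eta i z -> odometer Gam (fmap z).
Proof.
move=> Az; split => n; have [w [H1 H2]] := A_level Az n.
  by exists w; exact: fmap_val.
rewrite (fmap_val H1) (fmap_val H2) !lcosetE => x /=.
exact: (Gam_le (leqnSn n)).
Qed.

Lemma psi_fmap z : Aset Gam D r eta i z -> psi (fmap z) = z.
Proof.
move=> Az; apply: funext => h.
case: (psi_spec (fmap z) h) => [[a [ra [n [c [Dc fc Pc]]] ->]]|[-> nP]].
  have : fmap z n c by rewrite fc; exact: lcoset_self (Gam_sub n).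
  move=> /(_ a ra) e; apply/esym/(Per_val (n := n)).
  by rewrite e; apply/lcosetP.
apply/esym; apply: (A_hole Az) => n a ra Pz.
have [w [H1 _]] := A_level Az n.
apply: (nP a ra); exists n; apply/(Ppred_coset _ _ (fmap_val H1)).
by move: Pz; rewrite (H1 a ra) => /lcosetP.
Qed.


Hypothesis Gcount : countable [set: G].

Lemma mcyl g b : measurable [set x : configT G | x g = b].
Proof. by apply: sub_sigma_algebra; exists g, b. Qed.

Lemma mcylO n (C : set G) : measurable [set o : odoT G | o n = C].
Proof. by apply: sub_sigma_algebra; exists n, C. Qed.

Lemma mPer n a h : measurable [set x : configT G | Per x (Gam n) a h].
Proof.
apply: (mset_allC (P := fun c (x : configT G) => Gam n c -> x (c * h) = a)) => // c.
by apply: mset_imp; [exact: mset_const|exact: mcyl].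
Qed.

Lemma mPerEq n a (S : set G) : measurable [set x : configT G | Per x (Gam n) a = S].
Proof.
rewrite (_ : [set x | _] = [set x : configT G | forall h, Per x (Gam n) a h <-> S h]).
  apply: mset_allC => // h; apply: mset_iff; [exact: mPer|exact: mset_const].
apply/seteqP; split => x /=; first by move=> ->.
by move=> H; apply/seteqP; split => h /H.
Qed.

Lemma mshift_fun w : measurable_fun setT (shift w : configT G -> configT G).
Proof.
apply: (@measurability _ _ (configT G) (configT G) setT (shift w) (@cylG G)) => //.
move=> _ [_ [g [b ->]] <-]; rewrite setTI.
by rewrite (_ : _ @^-1` _ = [set x : configT G | x (w^-1 * g) = b]) //; exact: mcyl.
Qed.

Lemma mshift w (A : set (configT G)) : measurable A ->
  measurable [set x : configT G | A (shift w x)].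
Proof. by move=> mA; have := mshift_fun w measurableT mA; rewrite setTI. Qed.

Lemma morbit : measurable (orbit_closure eta : set (configT G)).
Proof.
have /countable_injP [f finj] := Gcount.
pose e n := xget 1 [set g | f g = n].
have esurj g : e (f g) = g.
  have : [set g' | f g' = f g] (e (f g)) by apply: xgetPex; exists g.
  by move=> /= efg; apply: finj; rewrite ?in_setE.
rewrite (_ : orbit_closure eta = [set x : configT G | forall N, exists g,
    forall k, (k <= N)%N -> x (e k) = shift g eta (e k)]).
  apply: mset_allN => N; apply: mset_exC => // g; apply: mset_ex_le => k; exact: mcyl.
apply/seteqP; split => x /= H.
  move=> N; have [g Hg] := H [set e k | k in `I_N.+1] (finite_image _ (finite_II _)).
  by exists g => k kN; rewrite Hg //; exists k => //=; rewrite /= ltnS.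
move=> F /finite_seqP [s ->].
have [g Hg] := H (\max_(h <- s) f h)%N; exists g => h hs.
by have := Hg (f h) (@leq_bigmax_seq _ s xpredT (fun h => f h) h hs isT); rewrite esurj => ->.
Qed.

Lemma mCset2 n j : measurable (Cset2 Gam D r eta n j : set (configT G)).
Proof.
rewrite /Cset2 /Cset; apply: mset_and.
  apply: mset_and; first exact: morbit.
  apply: mset_allN => a; apply: mset_imp; [exact: mset_const|exact: mPerEq].
by apply: mset_allC => // g; apply: mset_imp; [exact: mset_const|exact: mcyl].
Qed.

Lemma mAset : measurable (Aset Gam D r eta i : set (configT G)).
Proof.
rewrite (_ : Aset _ _ _ _ _ = [set z : configT G | forall g, exists k, forall l, (k <= l)%N ->
    exists v, D (i + l * r)%N v /\ Cset2 Gam D r eta (i + l * r)%N i (shift (v * g^-1) z)]).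
  apply: mset_allC => // g; apply: mset_exN => k; apply: mset_allN => l.
  apply: mset_imp; first exact: mset_const.
  apply: mset_exC => // v; apply: mset_and; first exact: mset_const.
  by apply: mshift; exact: mCset2.
by apply/seteqP; split => z /Aset_P.
Qed.

Lemma mfmap : measurable_fun setT (fmap : configT G -> odoT G).
Proof.
apply: (@measurability _ _ (configT G) (odoT G) setT fmap (@cylO G)) => //.
move=> _ [_ [n [C ->]] <-]; rewrite setTI.
rewrite (_ : fmap @^-1` _ = [set x : configT G | forall w, C w <->
    (forall a, (1 <= a <= r)%N -> Per x (Gam n) a = lcoset w (Per eta (Gam n) a))]).
  apply: mset_allC => // w; apply: mset_iff; first exact: mset_const.
  by apply: mset_allN => a; apply: mset_imp; [exact: mset_const|exact: mPerEq].
apply/seteqP; split => x /=; first by move=> <-.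
by move=> H; apply/seteqP; split => w /H.
Qed.

Lemma mPpred h a : measurable [set o : odoT G | Ppred o h a].
Proof.
apply: mset_exN => n; apply: mset_exC => // c.
by apply: mset_and3; [exact: mset_const|exact: mcylO|exact: mset_const].
Qed.

Lemma mpsi : measurable_fun setT (psi : odoT G -> configT G).
Proof.
apply: (@measurability _ _ (odoT G) (configT G) setT psi (@cylG G)) => //.
move=> _ [_ [h [b ->]] <-]; rewrite setTI.
by apply: (mfoldr (Q := fun a (o : odoT G) => Ppred o h a)) => a; exact: mPpred.
Qed.

Lemma mOdo : measurable (odometer Gam : set (odoT G)).
Proof.
rewrite (_ : odometer Gam = [set o : odoT G | forall n, exists c, exists c',
   D n c /\ D n.+1 c' /\ o n = lcoset c (Gam n) /\ o n.+1 = lcoset c' (Gam n.+1) /\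
   (lcoset c' (Gam n.+1) `<=` lcoset c (Gam n))]).
  apply: mset_allN => n; apply: mset_exC => // c; apply: mset_exC => // c'.
  apply: mset_and; first exact: mset_const.
  apply: mset_and; first exact: mset_const.
  apply: mset_and; first exact: mcylO.
  apply: mset_and; [exact: mcylO|exact: mset_const].
apply/seteqP; split => o /=.
  move=> [Ho Hsub] n.
  have [w on] := Ho n; have [w' on'] := Ho n.+1.
  have [c [Dc Gc]] := Dtrans n w; have [c' [Dc' Gc']] := Dtrans n.+1 w'.
  have e1 : o n = lcoset c (Gam n).
    by rewrite on; apply/(lcoset_eq _ _ (Gam_sub n)); have := GamV Gc; gsimp.
  have e2 : o n.+1 = lcoset c' (Gam n.+1).
    by rewrite on'; apply/(lcoset_eq _ _ (Gam_sub n.+1)); have := GamV Gc'; gsimp.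
  exists c, c'; do 4 (split => //).
  by rewrite -e1 -e2; exact: Hsub.
move=> H; split => n.
  by have [c [c' [_ [_ [-> _]]]]] := H n; exists c.
by have [c [c' [_ [_ [-> [-> ?]]]]]] := H n.
Qed.

Definition Cyl N c : set (odoT G) := [set o | odometer Gam o /\ o N = lcoset c (Gam N)].
Definition Acon N (M : nat -> bool) (C : nat -> set G) : set (odoT G) :=
  [set o | forall k, (k < N)%N -> M k -> o k = C k].
Definition PiS : set (set (odoT G)) :=
  [set A | A = set0 \/ exists N M C, A = Acon N M C].

Lemma odo_chain o k j : odometer Gam o -> o (j + k)%N `<=` o k.
Proof.
move=> [_ Hs']; elim: j => [|j IH] //; rewrite addSn.
exact: subset_trans (Hs' _) IH.
Qed.

Lemma coset_common n w y : lcoset w (Gam n) y -> lcoset w (Gam n) = lcoset y (Gam n).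
Proof. by move=> /lcosetP Gy; apply/(lcoset_eq _ _ (Gam_sub n)). Qed.

Lemma Cyl_coset N c o k : Cyl N c o -> (k <= N)%N -> o k = lcoset c (Gam k).
Proof.
move=> [Oo oN] kN; have [w ok] := Oo.1 k.
have : o k c.
  apply: (odo_chain (j := (N - k)%N) Oo); rewrite subnK // oN.
  exact: lcoset_self (Gam_sub N).
by rewrite ok => /coset_common ->.
Qed.

Lemma Cyl_disj N c c' : D N c -> D N c' -> c <> c' -> Cyl N c `&` Cyl N c' = set0.
Proof.
move=> Dc Dc' ne; apply/seteqP; split => // o [[_ e1] [_ e2]]; apply: ne.
apply: (Duniq Dc Dc'); apply/(lcoset_eq _ _ (Gam_sub N)); by rewrite -e1 -e2.
Qed.

Lemma Odo_cover N (s : seq G) : D N = [set` s] ->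
  odometer Gam = \bigcup_(c in [set` s]) Cyl N c.
Proof.
move=> Ds; apply/seteqP; split => o; last by move=> [c _ []].
move=> Oo; have [w on] := Oo.1 N; have [c [Dc Gc]] := Dtrans N w.
exists c; first by rewrite -Ds.
split => //; rewrite on; apply/(lcoset_eq _ _ (Gam_sub N)).
by have := GamV Gc; gsimp.
Qed.

Lemma Acon_Cyl N M C c : (exists o, Acon N M C o /\ Cyl N c o) -> Cyl N c `<=` Acon N M C.
Proof.
move=> [o [Ao Co]] o' Co' k kN Mk; rewrite -(Ao k kN Mk).
by rewrite (Cyl_coset Co (ltnW kN)) (Cyl_coset Co' (ltnW kN)).
Qed.

Lemma mCyl N c : measurable (Cyl N c).
Proof. by apply: mset_and; [exact: mOdo|exact: mcylO]. Qed.

Lemma mAcon N M C : measurable (Acon N M C).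
Proof.
apply: mset_allN => k; apply: mset_imp; first exact: mset_const.
by apply: mset_imp; [exact: mset_const|exact: mcylO].
Qed.

Lemma odo_actM (a b : G) (o : nat -> set G) : odo_act a (odo_act b o) = odo_act (a * b) o.
Proof. by apply: funext => n; rewrite /odo_act lcosetM. Qed.

Lemma odo_act1 (o : nat -> set G) : odo_act 1 o = o.
Proof. by apply: funext => n; rewrite /odo_act lcoset1. Qed.

Variable R : realType.
Local Open Scope ereal_scope.

Lemma msum_disj (m : measure (odoT G) R) (F : G -> set (odoT G)) (s : seq G) :
  uniq s -> (forall c, measurable (F c)) ->
  (forall c c', c \in s -> c' \in s -> c <> c' -> F c `&` F c' = set0) ->
  m (\bigcup_(c in [set` s]) F c) = \sum_(c <- s) m (F c).
Proof.
move=> + mF; elim: s => [|a s IH] /=.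
  move=> _ _; rewrite big_nil (_ : \bigcup_(c in _) F c = set0) ?measure0 //.
  by apply/seteqP; split => o // [c].
move=> /andP[ans us] dis; rewrite big_cons -IH //; last first.
  by move=> c c' cs c's; apply: dis; rewrite in_cons ?cs ?c's orbT.
rewrite (_ : \bigcup_(c in _) F c = F a `|` \bigcup_(c in [set` s]) F c).
  rewrite measureU //; first by apply: fin_bigcup_measurable.
  apply/seteqP; split => // o [Fa [c cs Fc]].
  have : F a `&` F c = set0.
    apply: dis; rewrite ?in_cons ?eqxx ?cs ?orbT //.
    by move=> e; move: ans; rewrite e cs.
  by move=> e; have : (F a `&` F c) o by []; rewrite e.
apply/seteqP; split => o.
  by move=> [c /=]; rewrite in_cons => /orP[/eqP ->|cs] Fc; [left|right; exists c].
case=> [Fa|[c cs Fc]]; first by exists a => //=; rewrite mem_head.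
by exists c => //=; rewrite in_cons cs orbT.
Qed.

Definition Odo : set (odoT G) := odometer Gam.
Lemma mOdo' : measurable Odo. Proof. exact: mOdo. Qed.

Section OneMeasure.
Variable m : measure (odoT G) R.
Hypothesis mT : m setT = 1.
Hypothesis mO : m (Odo) = 1.
Hypothesis mC : m (~` Odo) = 0.
Hypothesis minv : forall g (B : set (odoT G)), measurable B -> m (odo_act g @^-1` B) = m B.

Lemma Lm_Odo B : measurable B -> m B = m (B `&` Odo).
Proof.
move=> mB.
have eB : B = (B `&` Odo) `|` (B `&` ~` Odo) by rewrite -setIUr setUv setIT.
have m1 : measurable (B `&` Odo) by apply: measurableI => //; exact: mOdo'.
have m2 : measurable (B `&` ~` Odo).
  by apply: measurableI => //; apply: measurableC; exact: mOdo'.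
have dj : (B `&` Odo) `&` (B `&` ~` Odo) = set0.
  by rewrite setIACA setICr setI0.
have h0 : m (B `&` ~` Odo) = 0.
  apply/le_anti/andP; split; last exact: measure_ge0.
  by rewrite -mC; apply: le_measure; rewrite ?inE //; apply: measurableC; exact: mOdo'.
transitivity (m (B `&` Odo) + m (B `&` ~` Odo)); first by rewrite [in LHS]eB measureU.
by rewrite h0 adde0.
Qed.

Lemma Lm_Cyl N c : m (Cyl N c) = m (Cyl N 1).
Proof.
rewrite -(minv c^-1 (mCyl N 1)); congr (m _); apply/seteqP; split => o /=.
  move=> [Oo oN]; split; first exact: odo_act_odo.
  by rewrite /odo_act oN lcosetM mulVg.
move=> [Oo oN]; split.
  by have := odo_act_odo c Oo; rewrite odo_actM mulgV odo_act1.
by move: oN; rewrite /odo_act lcoset_eqV invgK lcoset1.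
Qed.

Lemma Lm_1 N (s : seq G) : uniq s -> D N = [set` s] -> \sum_(c <- s) m (Cyl N 1) = 1.
Proof.
move=> us Ds; rewrite -mO /Odo (Odo_cover Ds) msum_disj //.
- by apply: eq_bigr => c _; rewrite Lm_Cyl.
- exact: mCyl.
- by move=> c c' cs c's; apply: Cyl_disj; rewrite Ds.
Qed.

Lemma Lm_A N M C (s : seq G) : uniq s -> D N = [set` s] ->
  m (Acon N M C) = \sum_(c <- s)
     (if `[< exists o, Acon N M C o /\ Cyl N c o >] then m (Cyl N 1) else 0).
Proof.
move=> us Ds; rewrite Lm_Odo; last exact: mAcon.
rewrite /Odo (Odo_cover Ds) setI_bigcupr msum_disj //.
- apply: eq_bigr => c _; case: asboolP => [H|nH].
    by rewrite -(Lm_Cyl N c); congr (m _); apply/setIidr; exact: Acon_Cyl.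
  rewrite (_ : _ `&` _ = set0) ?measure0 //; apply/seteqP; split => // o [Ao Co].
  by apply: nH; exists o.
- by move=> c; apply: measurableI; [exact: mAcon|exact: mCyl].
- move=> c c' cs c's ne; rewrite setIACA setIid Cyl_disj ?setI0 //; by rewrite Ds.
Qed.

End OneMeasure.

Lemma Dseq N : exists s : seq G, uniq s /\ D N = [set` s].
Proof.
case: Hs => [_ [_ Ht _ _] _]; have /finite_seqP [s0 Ds0] := (Ht N).1.
exists (undup s0); split; first exact: undup_uniq.
by rewrite Ds0; apply/seteqP; split => x /=; rewrite mem_undup.
Qed.

Lemma PiS_gen : @measurable _ (odoT G) = <<s PiS >>.
Proof.
apply/seteqP; split => A.
  move=> mA; apply: mA; split; first exact: smallest_sigma_algebra.
  move=> _ [n [C ->]]; apply: sub_sigma_algebra; right.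
  exists n.+1, (fun k => k == n), (fun _ => C); apply/seteqP; split => o /=.
    by move=> on k _ /eqP ->.
  by move=> H; apply: H => //; rewrite ltnSn.
move=> sA; apply: sA; split; first exact: sigma_algebra_measurable.
by move=> _ [->|[N [M [C ->]]]]; [exact: measurable0|exact: mAcon].
Qed.

Lemma PiS_setI : setI_closed PiS.
Proof.
move=> A B [->|[N1 [M1 [C1 ->]]]]; first by rewrite set0I; left.
move=> [->|[N2 [M2 [C2 ->]]]]; first by rewrite setI0; left.
case: (pselect (exists k, [/\ (k < N1)%N, (k < N2)%N, M1 k, M2 k & C1 k <> C2 k])).
  move=> [k [k1 k2 m1 m2 ne]]; left; apply/seteqP; split => // o [A1 A2].
  by apply: ne; rewrite -(A1 k k1 m1) -(A2 k k2 m2).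
move=> nC; right.
exists (maxn N1 N2), (fun k => ((k < N1)%N && M1 k) || ((k < N2)%N && M2 k)),
  (fun k => if (k < N1)%N && M1 k then C1 k else C2 k).
apply/seteqP; split => o /=.
  move=> [A1 A2] k _; case: ifP => [/andP[k1 m1] _|_ /= /andP[k2 m2]].
    exact: A1.
  exact: A2.
move=> H; split => k kN Mk.
  by have := H k; rewrite kN Mk /=; apply => //; rewrite leq_max kN.
have := H k; case: ifP => [/andP[k1 m1]|_] /=; last first.
  by rewrite kN Mk => H'; apply: H' => //; rewrite leq_max kN orbT.
move=> H'; rewrite H' //; last by rewrite leq_max k1.
by apply: contrapT => ne; apply: nC; exists k.
Qed.

Lemma odo_unique (m1 m2 : measure (odoT G) R) :
  m1 setT = 1 -> m1 Odo = 1 -> m1 (~` Odo) = 0 ->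
  (forall g (B : set (odoT G)), measurable B -> m1 (odo_act g @^-1` B) = m1 B) ->
  m2 setT = 1 -> m2 Odo = 1 -> m2 (~` Odo) = 0 ->
  (forall g (B : set (odoT G)), measurable B -> m2 (odo_act g @^-1` B) = m2 B) ->
  forall B, measurable B -> m1 B = m2 B.
Proof.
move=> T1 O1 C1 I1 T2 O2 C2 I2.
have Ht N : m1 (Cyl N 1) = m2 (Cyl N 1).
  have [s [us Ds]] := Dseq N.
  have S1 : \sum_(c <- s) m1 (Cyl N 1) = 1 by apply: Lm_1.
  have S2 : \sum_(c <- s) m2 (Cyl N 1) = 1 by apply: Lm_1.
  have fin (m : measure (odoT G) R) : m setT = 1 -> m (Cyl N 1) \is a fin_num.
    move=> mT; rewrite ge0_fin_numE ?measure_ge0 //.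
    apply: (le_lt_trans (y := m setT)); last by rewrite mT ltry.
    by apply: le_measure; rewrite ?inE //; exact: mCyl.
  move: S1 S2; rewrite -(fineK (fin _ T1)) -(fineK (fin _ T2)) !sumEFin.
  rewrite !big_const_seq count_predT !iter_addr_0 => -[e1] [e2].
  congr EFin; apply: (@mulIf _ (size s)%:R); last by rewrite !mulr_natr e1 e2.
  rewrite pnatr_eq0; apply/eqP => s0; move: Ds; rewrite (size0nil s0) => D0'.
  case: Hs => [_ [_ _ HD1 _] _]; have := (HD1 N).1; rewrite D0' //.
apply: (measure_unique PiS (fun=> setT)) => //.
- exact: PiS_gen.
- exact: PiS_setI.
- move=> _; right; exists 0%N, (fun=> false), (fun=> set0).
  by apply/seteqP; split.
- by rewrite bigcup_const.
- move=> A [->|[N [M [C ->]]]]; first by rewrite !measure0.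
  have [s [us Ds]] := Dseq N.
  rewrite (Lm_A C1 I1 M C us Ds) (Lm_A C2 I2 M C us Ds).
  by apply: eq_bigr => c _; rewrite Ht.
- by move=> _; rewrite T1 ltry.
Qed.

Lemma mpre_fmap (B : set (odoT G)) : measurable B -> measurable [set x : configT G | B (fmap x)].
Proof. by move=> mB; have := mfmap measurableT mB; rewrite setTI. Qed.

Lemma mpre_psi (B : set (configT G)) : measurable B -> measurable [set o : odoT G | B (psi o)].
Proof. by move=> mB; have := mpsi measurableT mB; rewrite setTI. Qed.

Lemma fmap_act g z : fmap (shift g z) = odo_act g (fmap z).
Proof. by apply: funext => n; rewrite fmap_shift. Qed.

Definition X0 : set (configT G) :=
  [set x | orbit_closure eta x /\ Odo (fmap x) /\ psi (fmap x) = x].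

Definition Y0 : set (odoT G) :=
  [set o | Odo o /\ X0 (psi o) /\ fmap (psi o) = o].

Lemma mX0 : measurable X0.
Proof.
apply: mset_and; first exact: morbit.
apply: mset_and; first by apply: mpre_fmap; exact: mOdo'.
rewrite (_ : [set x | _] = [set x : configT G | forall h, exists b, psi (fmap x) h = b /\ x h = b]).
  apply: mset_allC => // h; apply: mset_exN => b; apply: mset_and; last exact: mcyl.
  have M : measurable [set o : odoT G | psi o h = b].
    exact: (mpre_psi (mcyl h b)).
  exact: (mpre_fmap M).
apply/seteqP; split => x /=; first by move=> ->; move=> h; exists (x h).
by move=> H; apply: funext => h; have [b [-> ->]] := H h.
Qed.

Lemma mY0 : measurable Y0.
Proof.
rewrite (_ : Y0 = [set o : odoT G | Odo o /\ X0 (psi o) /\ forall n, exists c,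
   [/\ D n c, o n = lcoset c (Gam n) & fmap (psi o) n = lcoset c (Gam n)]]).
  apply: mset_and; first exact: mOdo'.
  apply: mset_and; first by apply: mpre_psi; exact: mX0.
  apply: mset_allN => n; apply: mset_exC => // c.
  apply: mset_and3; [exact: mset_const|exact: mcylO|].
  have M : measurable [set x : configT G | fmap x n = lcoset c (Gam n)].
    exact: (mpre_fmap (mcylO n (lcoset c (Gam n)))).
  exact: (mpre_psi M).
apply/seteqP; split => o [Oo [Xo H]]; do 2 (split => //).
  move=> n; have [w on] := Oo.1 n; have [c [Dc Gc]] := Dtrans n w.
  have e : o n = lcoset c (Gam n).
    by rewrite on; apply/(lcoset_eq _ _ (Gam_sub n)); have := GamV Gc; gsimp.
  by exists c; split => //; rewrite H.
by apply: funext => n; have [c [_ -> ->]] := H n.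
Qed.

Lemma main_conj (mu : probability (configT G) R) (nu : probability (odoT G) R) :
  mu (orbit_closure eta) = 1%E ->
  (forall g (A : set (configT G)), measurable A -> mu (shift g @^-1` A) = mu A) ->
  mu (Aset Gam D r eta i) = 1%E ->
  nu (odometer Gam) = 1%E ->
  (forall g (B : set (odoT G)), measurable B -> nu (odo_act g @^-1` B) = nu B) ->
  measure_conjugate (orbit_closure eta : set (configT G)) (@shift G) mu
                    (odometer Gam : set (odoT G)) (@odo_act G) nu.
Proof.
move=> muX muinv muA nuO nuinv.
have mX : measurable (orbit_closure eta : set (configT G)) := morbit.
have XA0 : orbit_closure eta `&` Aset Gam D r eta i `<=` X0.
  by move=> x [Xx Ax]; split => //; split; [exact: fmap_odo|exact: psi_fmap].
have muXA : mu (orbit_closure eta `&` Aset Gam D r eta i) = 1%E.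
  by rewrite (pI1 mAset muA mX).
have muX0 : mu X0 = 1%E.
  apply: (p_mono1 _ mX0 XA0 muXA); exact: measurableI mX mAset.
have X0inv g (x : configT G) : X0 x -> X0 (shift g x).
  move=> [Xx [Ox px]]; split; first exact: orbit_shift.
  rewrite fmap_act; split; first exact: odo_act_odo.
  by rewrite psi_act // px.
have X0Y0 : X0 `<=` [set x : configT G | Y0 (fmap x)].
  by move=> x X0x; have [_ [Ox px]] := X0x; split => //; rewrite px.
have mf := mfmap.
pose pf := pfm mu mf.
have pfE B : pf B = mu (fmap @^-1` B) by [].
have nupf B : measurable B -> nu B = pf B.
  apply: odo_unique.
  - exact: probability_setT.
  - exact: nuO.
  - by apply: pC0 => //; exact: mOdo'.
  - exact: nuinv.
  - by rewrite pfE preimage_setT probability_setT.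
  - rewrite pfE; apply: (p_mono1 _ _ _ muX0) => //; first exact: mX0.
      by apply: mpre_fmap; exact: mOdo'.
    by move=> x [_ []].
  - rewrite pfE (_ : _ @^-1` _ = ~` [set x : configT G | Odo (fmap x)]) //; apply: pC0; first by apply: mpre_fmap; exact: mOdo'.
    apply: (p_mono1 _ _ _ muX0) => //; first exact: mX0.
      by apply: mpre_fmap; exact: mOdo'.
    by move=> x [_ []].
  - move=> g B0 mB0; rewrite !pfE -[RHS](muinv g); last exact: (mpre_fmap mB0).
    by congr (mu _); apply/seteqP; split => x /=; rewrite fmap_act.
have nuY0 : nu Y0 = 1%E.
  rewrite nupf; last exact: mY0.
  rewrite pfE; apply: (p_mono1 _ _ X0Y0 muX0); first exact: mX0.
  by apply: mpre_fmap; exact: mY0.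
exists X0, Y0, fmap; split.
- split; [exact: mX0|by move=> x []| |exact: X0inv].
  apply/le_anti/andP; split; last exact: measure_ge0.
  rewrite -(pC0 mX0 muX0); apply: le_measure; rewrite ?inE //;
    first [exact: (measurableD mX mX0) | exact: (measurableC mX0) | by move=> x []].
- split; [exact: mY0|by move=> o []| |].
  + apply/le_anti/andP; split; last exact: measure_ge0.
    rewrite -(pC0 mY0 nuY0); apply: le_measure; rewrite ?inE //;
      first [exact: (measurableD mOdo' mY0) | exact: (measurableC mY0) | by move=> x []].
  + move=> g o [Oo [X0p fp]]; split; first exact: odo_act_odo.
    rewrite psi_act //; split; first exact: X0inv.
    by rewrite fmap_act fp.
- split.
  + split.
    * exact: X0Y0.
    * move=> x y; rewrite !inE => -[_ [_ px]] [_ [_ py]] e.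
      by rewrite -px -py e.
    * by move=> o [Oo [X0p fp]]; exists (psi o).
  + by apply: (measurable_funS measurableT) => //; exact: mfmap.
  + move=> A mA.
    rewrite (_ : fmap @` (X0 `&` A) = Y0 `&` [set o | A (psi o)]).
      by apply: measurableI; [exact: mY0|exact: mpre_psi].
    apply/seteqP; split.
      move=> _ [x [X0x Ax] <-]; split; first exact: X0Y0.
      by have [_ [_ px]] := X0x; rewrite /= px.
    by move=> o [[Oo [X0p fp]] Ap]; exists (psi o).
- by move=> g x _; rewrite fmap_act.
- move=> B mB; rewrite nupf; last by apply: measurableI => //; exact: mY0.
  rewrite pfE -(pI1 mX0 muX0); last by apply: mpre_fmap; apply: measurableI => //; exact: mY0.
  rewrite setIC; congr (mu _); apply/seteqP; split => x.
    by move=> [X0x [_ Bx]].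
  by move=> [X0x Bx]; split => //; split => //; exact: X0Y0.
Qed.

End Toep.

Theorem proposition5p8 (R : realType) (G : groupType)
  (Gam D : nat -> set G) (r : nat) (eta : G -> nat)
  (mu : probability (configT G) R) (i : nat) :
  countable [set: G] ->
  residually_finite G ->
  setting Gam D ->
  (1 < r)%N ->
  (forall m h g, J Gam D m h -> Gam m.+1 g -> eta (h * g) = alpha r m.+1) ->
  mu (orbit_closure eta) = 1%E ->
  (forall g (A : set (configT G)), measurable A -> mu (shift g @^-1` A) = mu A) ->
  (1 <= i <= r)%N ->
  mu (Aset Gam D r eta i) = 1%E ->
  forall nu : probability (odoT G) R,
    nu (odometer Gam) = 1%E ->
    (forall g (B : set (odoT G)), measurable B -> nu (odo_act g @^-1` B) = nu B) ->
    measure_conjugate (orbit_closure eta : set (configT G)) (@shift G) mu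
                      (odometer Gam : set (odoT G)) (@odo_act G) nu.
Proof.
move=> Gc _ Hs r1 Heta muX muinv ir muA nu nuO nuinv.
exact: (main_conj Hs r1 Heta ir Gc muX muinv muA nuO nuinv).
Qed.
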